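(* Let $(s_i)_{i\in\mathbb{Z}}$ be a strictly increasing bi-infinite real sequence, unbounded above and below, and let $F:\mathbb{R}^2\to\mathbb{R}^d$ satisfy $$F(s,t)=\frac{s-s_i}{s_{i+1}-s_i}F(s_{i+1},t)+\frac{s_{i+1}-s}{s_{i+1}-s_i}F(s_i,t),\qquad s\in[s_i,s_{i+1}],\ t\in\mathbb{R},\ i\in\mathbb{Z}.$$ Suppose $\|[\sigma_1,\sigma_2;\tau_1,\tau_2]F\|_\infty\le L$ whenever $\sigma_1\ne\sigma_2$ both lie in $[s_i,s_{i+1}]$ for some $i\in\mathbb{Z}$ and $\tau_1\ne\tau_2$ are arbitrary reals. Then $F$ has the BMSDD property with constant $L$ in $\mathbb{R}^2$.
   Context: For $\sigma_1\ne\sigma_2$, $\tau_1\ne\tau_2$, $[\sigma_1,\sigma_2;\tau_1,\tau_2]F=\frac{F(\sigma_1,\tau_1)+F(\sigma_2,\tau_2)-F(\sigma_2,\tau_1)-F(\sigma_1,\tau_2)}{(\sigma_1-\sigma_2)(\tau_1-\tau_2)}$. $F$ has the BMSDD property with constant $L$ in $\mathbb{R}^2$ if $\|[\sigma_1,\sigma_2;\tau_1,\tau_2]F\|_\infty\le L$ for all reals $\sigma_1\ne\sigma_2$, $\tau_1\ne\tau_2$. *)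

(* Defs.v *)
From HB Require Import structures.
From mathcomp Require Import all_boot all_order all_algebra.
From mathcomp Require Import reals.
Set Implicit Arguments. Unset Strict Implicit. Unset Printing Implicit Defensive.
Import Order.TTheory GRing.Theory Num.Theory.
Local Open Scope ring_scope.

Definition supnorm {R : realType} {d : nat} (v : 'rV[R]_d) : R :=
  \big[Num.max/0]_(j < d) `|v ord0 j|.

Definition mdd {R : realType} {d : nat} (F : R -> R -> 'rV[R]_d)
  (s1 s2 t1 t2 : R) : 'rV[R]_d :=
  ((s1 - s2) * (t1 - t2))^-1 *: (F s1 t1 + F s2 t2 - F s2 t1 - F s1 t2).

Definition BMSDD {R : realType} {d : nat} (F : R -> R -> 'rV[R]_d) (L : R) : Prop :=
  forall s1 s2 t1 t2 : R, s1 != s2 -> t1 != t2 -> supnorm (mdd F s1 s2 t1 t2) <= L.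

(* Main.v *)
Require Import Defs.
From HB Require Import structures.
From mathcomp Require Import all_boot all_order all_algebra.
From mathcomp Require Import reals.
From mathcomp Require Import ring lra.
Import Order.TTheory GRing.Theory Num.Theory.
Local Open Scope ring_scope.

Lemma supnorm_ge {R : realType} {d} (v : 'rV[R]_d) j : `|v ord0 j| <= supnorm v.
Proof.
rewrite /supnorm.
have : j \in index_enum 'I_d by rewrite mem_index_enum.
elim: (index_enum _) => [//|k r IH]; rewrite inE big_cons => /orP [/eqP ->|/IH H].
  by rewrite le_max lexx.
by rewrite le_max H orbT.
Qed.

Lemma supnorm_ge0 {R : realType} {d} (v : 'rV[R]_d) : 0 <= supnorm v.
Proof.
rewrite /supnorm; apply: (big_ind (fun x => 0 <= x)) => //.
by move=> x y hx hy; rewrite le_max hx.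
Qed.

Lemma supnorm_le (R : realType) d (v : 'rV[R]_d) L :
  0 <= L -> (forall j, `|v ord0 j| <= L) -> supnorm v <= L.
Proof.
move=> L0 H; rewrite /supnorm; apply: (big_ind (fun x => x <= L)) => //.
by move=> x y hx hy; rewrite ge_max hx.
Qed.

Lemma chain {R : realType} {s : int -> R} {h : R -> R} {K : R}
  (loc : forall i x1 x2, s i <= x1 <= s (i + 1) -> s i <= x2 <= s (i + 1) ->
     `|h x1 - h x2| <= K * `|x1 - x2|) :
  forall (n : nat) i x y, s i <= x -> x <= y -> y <= s (i + n%:Z) ->
     `|h x - h y| <= K * (y - x).
Proof.
elim=> [|n IH] i x y hx hxy hy.
  rewrite addr0 in hy; have xy : x = y by lra.
  by rewrite xy !subrr normr0 mulr0.
rewrite intS addrA in hy.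
case: (lerP (s (i + 1)) x) => hx1.
  exact: IH hx1 hxy hy.
case: (lerP y (s (i + 1))) => hy1.
  have := loc i x y; rewrite (distrC x y) (ger0_norm (x:=y-x)) ?subr_ge0 //.
  by apply; lra.
have h1 := loc i x (s (i + 1)).
rewrite (distrC x) (ger0_norm (x:=s (i+1) - x)) ?subr_ge0 in h1; last by lra.
have h2 := IH (i + 1) (s (i + 1)) y (lexx _) (ltW hy1) hy.
have h3 := ler_distD (h (s (i + 1))) (h x) (h y).
have h1' : `|h x - h (s (i + 1))| <= K * (s (i + 1) - x) by apply: h1; lra.
have -> : K * (y - x) = K * (s (i + 1) - x) + K * (y - s (i + 1)) by ring.
lra.
Qed.

Lemma s_mono {R : realType} {s : int -> R} (s_incr : forall i : int, s i < s (i + 1)) :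
  forall (n : nat) i, s i <= s (i + n%:Z).
Proof.
elim=> [|n IH] i; first by rewrite addr0.
rewrite intS addrA; apply: le_trans (IH (i + 1)); exact: ltW.
Qed.

Theorem lemma6 (R : realType) (d : nat) (s : int -> R)
  (F : R -> R -> 'rV[R]_d) (L : R)
  (s_incr : forall i : int, s i < s (i + 1))
  (s_unb_above : forall M : R, exists i : int, M < s i)
  (s_unb_below : forall M : R, exists i : int, s i < M)
  (F_pl : forall (i : int) (x t : R), s i <= x <= s (i + 1) ->
     F x t = ((x - s i) / (s (i + 1) - s i)) *: F (s (i + 1)) t
           + ((s (i + 1) - x) / (s (i + 1) - s i)) *: F (s i) t)
  (F_loc : forall (i : int) (x1 x2 t1 t2 : R),
     x1 != x2 -> s i <= x1 <= s (i + 1) -> s i <= x2 <= s (i + 1) ->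
     t1 != t2 -> supnorm (mdd F x1 x2 t1 t2) <= L) :
  BMSDD F L.
Proof.
have L0 : 0 <= L.
  have H := F_loc 0 (s 0) (s (0 + 1)) (0:R) (1:R).
  apply: le_trans (supnorm_ge0 (mdd F (s 0) (s (0 + 1)) (0:R) (1:R))) _.
  apply: H; rewrite ?lexx ?ltW //; last by rewrite eq_sym oner_eq0.
  by rewrite neq_lt s_incr.
move=> s1 s2 t1 t2 hs ht; apply: supnorm_le => // j.
pose h x := F x t1 ord0 j - F x t2 ord0 j.
have ent : forall x1 x2, mdd F x1 x2 t1 t2 ord0 j
    = ((x1 - x2) * (t1 - t2))^-1 * (h x1 - h x2).
  by move=> x1 x2; rewrite /mdd /h !mxE; congr (_ * _); ring.
have tpos : 0 < `|t1 - t2| by rewrite normr_gt0 subr_eq0.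
have loc : forall i x1 x2, s i <= x1 <= s (i + 1) -> s i <= x2 <= s (i + 1) ->
     `|h x1 - h x2| <= (L * `|t1 - t2|) * `|x1 - x2|.
  move=> i x1 x2 h1 h2; have [->|nx] := eqVneq x1 x2.
    by rewrite !subrr normr0 mulr0.
  have := le_trans (supnorm_ge _ j) (F_loc i x1 x2 t1 t2 nx h1 h2 ht).
  rewrite ent normrM normfV ler_pdivrMl; last first.
    by rewrite normr_gt0 mulf_neq0 // subr_eq0.
  by rewrite normrM => H; apply: le_trans H _; rewrite le_eqVlt; apply/orP; left; apply/eqP; ring.
have glob : forall x y, x <= y -> `|h x - h y| <= (L * `|t1 - t2|) * (y - x).
  move=> x y hxy.
  have [a ha] := s_unb_below x; have [b hb] := s_unb_above y.
  have ab : 0 <= b - a.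
    rewrite leNgt; apply/negP => hba.
    have e : a = b + (`|a - b|%N)%:Z.
      by rewrite gez0_abs ?subr_ge0; [ring| lra].
    have := s_mono (s := s) s_incr `|a - b|%N b; rewrite -e; lra.
  apply: (chain loc `|b - a|%N a) => //; first exact: ltW.
  rewrite gez0_abs // (addrC a) subrK; exact: ltW.
have gl2 : `|h s1 - h s2| <= (L * `|t1 - t2|) * `|s1 - s2|.
  case: (lerP s1 s2) => h12.
    exact: glob.
  rewrite distrC; apply: glob; exact: ltW.
rewrite ent normrM normfV ler_pdivrMl; last first.
  by rewrite normr_gt0 mulf_neq0 // subr_eq0.
apply: le_trans gl2 _; rewrite normrM le_eqVlt; apply/orP; left; apply/eqP; ring.
Qed.
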